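(* Let $A$ be an $n\times m$ real matrix with $n\ge 2$ and $m\geq2$, and suppose that for some $k$ the $k$th column of $A$ has exactly one nonzero entry. Let $\tilde A$ be the $n\times(m-1)$ matrix obtained from $A$ by deleting its $k$th column. Then $G^{[2]}_{\tilde A,\tilde A^t}$ is odd$^*$ (respectively odd, respectively steady) if and only if $G^{[2]}_{A,A^t}$ is odd$^*$ (respectively odd, respectively steady).
   Context: DSR graphs: for $P\in\mathbb{R}^{n\times m}$, $Q\in\mathbb{R}^{m\times n}$, $G_{P,Q}$ is the signed, labelled bipartite digraph with S-vertices $S_1,\dots,S_n$ and R-vertices $R_1,\dots,R_m$, with an arc $R_j\to S_i$ of sign $\mathrm{sign}(P_{ij})$ iff $P_{ij}\ne0$ and an arc $S_i\to R_j$ of sign $\mathrm{sign}(Q_{ji})$ iff $Q_{ji}\ne0$; antiparallel arcs of equal sign are merged into a single undirected edge. An edge arising from $P_{ij}\ne0$ (R-to-S or undirected) has label $|P_{ij}|$; an edge with only S-to-R orientation has label $\infty$. Walks traverse edges consistently with orientation; a cycle is a nonempty closed walk repeating no vertex except first$=$last. The parity of a cycle $W$ is $(-1)^{|W|/2}\mathrm{sign}(W)$ ($|W|$ = length, $\mathrm{sign}(W)$ = product of edge signs); e-cycles have parity $1$. A cycle $(e_1,\dots,e_{2r})$ is an s-cycle if all labels are finite and $\prod l(e_{2i-1})=\prod l(e_{2i})$. Two cycles have odd intersection if they can be oriented so as to induce the same direction on every common edge and each connected component of their intersection has odd length. A DSR graph is odd if it has no e-cycles; odd$^*$ if all e-cycles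 are s-cycles and no two e-cycles have odd intersection; steady if all cycles are s-cycles. DSR$^{[2]}$ graph: for $A\in\mathbb{R}^{n\times m}$, $B\in\mathbb{R}^{m\times n}$, $n\ge2$, let $\overline{\mathbf L}^A\in\mathbb{R}^{\binom n2\times mn}$ (rows $(i,j)$, $i<j$; columns $(k,l)$, $1\le k\le m$, $1\le l\le n$) have entries $A_{jk}$ if $l=i$, $-A_{ik}$ if $l=j$, $0$ otherwise, and $\underline{\mathbf L}^B\in\mathbb{R}^{mn\times\binom n2}$ have $(k,l),(i,j)$ entry $B_{kj}$ if $l=i$, $-B_{ki}$ if $l=j$, $0$ otherwise. Then $G^{[2]}_{A,B}:=G_{\overline{\mathbf L}^A,\underline{\mathbf L}^B}$. *)

(* Defs.v *)
From HB Require Import structures.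
From mathcomp Require Import all_boot all_order all_algebra.
Set Implicit Arguments. Unset Strict Implicit. Unset Printing Implicit Defensive.
Import Order.TTheory GRing.Theory Num.Theory.
Local Open Scope ring_scope.

(* General DSR graph G_{P,Q}.  S-vertices are indexed by a finite type Sv,  *)
(* R-vertices by a finite type Rv; P s r plays the role of P_{sr} and       *)
(* Q r s the role of Q_{rs}.                                                *)
(* Edges are triples (s, r, b) : Sv * Rv * bool:                            *)
(*  - (s, r, true)  = the edge coming from P_{sr} <> 0 (R-to-S arc, merged  *)
(*    into an undirected edge when Q_{rs} has the same sign); label |P_sr|; *)
(*  - (s, r, false) = the S-to-R arc coming from Q_{rs} <> 0 when it is NOT *)
(*    merged (i.e. sign Q_rs <> sign P_rs); label infinity.                 *)
Section DSR.
Variables (R : realFieldType) (Sv Rv : finType).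
Variables (P : Sv -> Rv -> R) (Q : Rv -> Sv -> R).

Definition dsr_edgeT := (Sv * Rv * bool)%type.
Definition dsr_vertex := (Sv + Rv)%type.
(* a traversal of an edge: (edge, dir), dir = true means S-to-R *)
Definition dsr_trav := (dsr_edgeT * bool)%type.

Definition dsr_edge (e : dsr_edgeT) : bool :=
  let: (s, r, b) := e in
  if b then P s r != 0
  else (Q r s != 0) && (Num.sg (Q r s) != Num.sg (P s r)).

Definition edge_sign (e : dsr_edgeT) : R :=
  let: (s, r, b) := e in if b then Num.sg (P s r) else Num.sg (Q r s).

(* None stands for the label infinity *)
Definition edge_label (e : dsr_edgeT) : option R :=
  let: (s, r, b) := e in if b then Some `|P s r| else None.

(* traversal consistent with orientation *)
Definition trav_ok (t : dsr_trav) : bool :=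
  let: ((s, r, b), dir) := t in
  dsr_edge (s, r, b) &&
  (if dir then (if b then Num.sg (Q r s) == Num.sg (P s r) else true) else b).

Definition trav_tail (t : dsr_trav) : dsr_vertex :=
  let: ((s, r, _), dir) := t in if dir then inl s else inr r.
Definition trav_head (t : dsr_trav) : dsr_vertex :=
  let: ((s, r, _), dir) := t in if dir then inr r else inl s.

Definition is_cycle (c : seq dsr_trav) : bool :=
  [&& (0 < size c)%N, all trav_ok c,
      cycle (fun t u => trav_head t == trav_tail u) c,
      uniq (map trav_tail c) & uniq (map fst c)].

Definition cycle_sign (c : seq dsr_trav) : R := \prod_(t <- c) edge_sign t.1.

Definition cycle_parity (c : seq dsr_trav) : R :=
  (-1) ^+ (size c)./2 * cycle_sign c.

Definition e_cycle (c : seq dsr_trav) : bool :=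
  is_cycle c && (cycle_parity c == 1).

(* s-cycle: all labels finite and product of labels of edges in odd        *)
(* positions (1-indexed: e_1, e_3, ...) equals that of even positions.     *)
Definition s_cycle (c : seq dsr_trav) : bool :=
  [&& is_cycle c,
      all (fun t => edge_label t.1 != None) c &
      \prod_(p <- zip (iota 0 (size c)) c | ~~ odd p.1) odflt 0 (edge_label p.2.1)
      == \prod_(p <- zip (iota 0 (size c)) c | odd p.1) odflt 0 (edge_label p.2.1)].

Definition cyc_edges (c : seq dsr_trav) := map fst c.
Definition cyc_verts (c : seq dsr_trav) := map trav_tail c.

Definition same_cycle (c d : seq dsr_trav) : Prop := cyc_edges c =i cyc_edges d.

Definition dir_agree (c d : seq dsr_trav) : bool :=
  all (fun t => all (fun u => (t.1 == u.1) ==> (t.2 == u.2)) d) c.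

Definition common_edge (c d : seq dsr_trav) (e : dsr_edgeT) : bool :=
  (e \in cyc_edges c) && (e \in cyc_edges d).
Definition common_vert (c d : seq dsr_trav) (v : dsr_vertex) : bool :=
  (v \in cyc_verts c) && (v \in cyc_verts d).

Definition edge_ends (e : dsr_edgeT) : dsr_vertex * dsr_vertex :=
  (inl e.1.1, inr e.1.2).

Definition inter_adj (c d : seq dsr_trav) : rel dsr_vertex :=
  fun x y => [exists e, common_edge c d e &&
                ((edge_ends e == (x, y)) || (edge_ends e == (y, x)))].

Definition comp_length (c d : seq dsr_trav) (v : dsr_vertex) : nat :=
  #|[set e | common_edge c d e && connect (inter_adj c d) v (edge_ends e).1]|.

Definition odd_intersection (c d : seq dsr_trav) : Prop :=
  exists c' d', [/\ is_cycle c', is_cycle d', same_cycle c c', same_cycle d d'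
    & [&& dir_agree c' d',
       [exists v, common_vert c' d' v] &
       [forall v, common_vert c' d' v ==> odd (comp_length c' d' v)]]].

Definition dsr_odd : Prop := forall c, ~~ e_cycle c.

Definition dsr_odd_star : Prop :=
  (forall c, e_cycle c -> s_cycle c) /\
  (forall c d, e_cycle c -> e_cycle d -> ~ odd_intersection c d).

Definition dsr_steady : Prop := forall c, is_cycle c -> s_cycle c.

End DSR.

(* DSR^[2] graph.  Rows (i,j), i<j, are indexed by pairs2 n; columns (k,l)  *)
(* by 'I_m * 'I_n.                                                          *)
Definition pairs2 (n : nat) := {p : 'I_n * 'I_n | (p.1 < p.2)%N}.

Definition L2bar (R : ringType) (n m : nat) (A : 'M[R]_(n, m))
    (p : pairs2 n) (kl : 'I_m * 'I_n) : R :=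
  let i := (val p).1 in let j := (val p).2 in
  let k := kl.1 in let l := kl.2 in
  if l == i then A j k else if l == j then - A i k else 0.

Definition L2under (R : ringType) (n m : nat) (B : 'M[R]_(m, n))
    (kl : 'I_m * 'I_n) (p : pairs2 n) : R :=
  let i := (val p).1 in let j := (val p).2 in
  let k := kl.1 in let l := kl.2 in
  if l == i then B k j else if l == j then - B k i else 0.

(* G^[2]_{A,B} is the DSR graph G_{L2bar A, L2under B}; the predicates     *)
Definition dsr2_odd (R : realFieldType) n m (A : 'M[R]_(n, m)) (B : 'M[R]_(m, n)) :=
  dsr_odd (L2bar A) (L2under B).
Definition dsr2_odd_star (R : realFieldType) n m (A : 'M[R]_(n, m)) (B : 'M[R]_(m, n)) :=
  dsr_odd_star (L2bar A) (L2under B).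
Definition dsr2_steady (R : realFieldType) n m (A : 'M[R]_(n, m)) (B : 'M[R]_(m, n)) :=
  dsr_steady (L2bar A) (L2under B).

(* Main.v *)
Require Import Defs.
From HB Require Import structures.
From mathcomp Require Import all_boot all_order all_algebra.
Set Implicit Arguments. Unset Strict Implicit. Unset Printing Implicit Defensive.
Import Order.TTheory GRing.Theory Num.Theory.
Local Open Scope ring_scope.

Lemma connect_homo (T U : finType) (f : T -> U) (e : rel T) (e' : rel U) :
  (forall x y, e x y -> e' (f x) (f y)) ->
  forall x y, connect e x y -> connect e' (f x) (f y).
Proof.
move=> H x y /connectP[p ep ->]; elim: p x ep => [|z p IH] x /=.
  by rewrite connect0.
move=> /andP[exz /IH]; apply: connect_trans; exact/connect1/H.
Qed.

Lemma uniq_map_in (T U : eqType) (f : T -> U) (s : seq T) x y :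
  uniq (map f s) -> x \in s -> y \in s -> f x = f y -> x = y.
Proof.
elim: s => //= z s IH /andP[nz us]; rewrite !inE.
case/orP=> [/eqP->|xs]; case/orP=> [/eqP->|ys] // fe.
- by move: nz; rewrite fe map_f.
- by move: nz; rewrite -fe map_f.
- exact: IH.
Qed.

Lemma mem_map_eqi (T U : eqType) (f : T -> U) (fi : injective f) (s1 s2 : seq T) :
  (map f s1 =i map f s2) <-> (s1 =i s2).
Proof.
split=> H x.
  by rewrite -(mem_map fi) H (mem_map fi).
apply/mapP/mapP=> -[y yin ->]; exists y => //; by rewrite ?H // -H.
Qed.

Lemma zip_mapr (S T U : Type) (f : T -> U) (s : seq S) (t : seq T) :
  zip s (map f t) = map (fun p => (p.1, f p.2)) (zip s t).
Proof. by elim: s t => [|x s IH] [|y t] //=; rewrite IH. Qed.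

Section Transfer.
Variables (R : realFieldType) (Sv Rs Rb : finType).
Variables (P : Sv -> Rb -> R) (Q : Rb -> Sv -> R).
Variables (P' : Sv -> Rs -> R) (Q' : Rs -> Sv -> R).
Variables (h : Rs -> Rb) (g : Rb -> Rs).
Hypothesis hK : cancel h g.
Hypothesis HP : forall s r, P' s r = P s (h r).
Hypothesis HQ : forall r s, Q' r s = Q (h r) s.

Definition Fe (e : dsr_edgeT Sv Rs) : dsr_edgeT Sv Rb := (e.1.1, h e.1.2, e.2).
Definition Ft (t : dsr_trav Sv Rs) : dsr_trav Sv Rb := (Fe t.1, t.2).
Definition Ge (e : dsr_edgeT Sv Rb) : dsr_edgeT Sv Rs := (e.1.1, g e.1.2, e.2).
Definition Gt (t : dsr_trav Sv Rb) : dsr_trav Sv Rs := (Ge t.1, t.2).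
Definition Hv (v : dsr_vertex Sv Rs) : dsr_vertex Sv Rb :=
  match v with inl s => inl s | inr r => inr (h r) end.
Definition Gv (v : dsr_vertex Sv Rb) : dsr_vertex Sv Rs :=
  match v with inl s => inl s | inr r => inr (g r) end.

Lemma h_inj : injective h. Proof. exact: can_inj hK. Qed.
Lemma HvK : cancel Hv Gv. Proof. by case=> //= r; rewrite hK. Qed.
Lemma Hv_inj : injective Hv. Proof. exact: can_inj HvK. Qed.
Lemma FeK : cancel Fe Ge. Proof. by case=> [[s r] b] /=; rewrite /Fe /Ge /= hK. Qed.
Lemma Fe_inj : injective Fe. Proof. exact: can_inj FeK. Qed.
Lemma FtK : cancel Ft Gt. Proof. by case=> e d; rewrite /Ft /Gt /= FeK. Qed.
Lemma Ft_inj : injective Ft. Proof. exact: can_inj FtK. Qed.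

Lemma trav_okF t : trav_ok P Q (Ft t) = trav_ok P' Q' t.
Proof. by case: t => [[[s r] b] d]; rewrite /= HP HQ. Qed.
Lemma tailF t : trav_tail (Ft t) = Hv (trav_tail t).
Proof. by case: t => [[[s r] b] [|]]. Qed.
Lemma headF t : trav_head (Ft t) = Hv (trav_head t).
Proof. by case: t => [[[s r] b] [|]]. Qed.
Lemma signF e : edge_sign P Q (Fe e) = edge_sign P' Q' e.
Proof. by case: e => [[s r] [|]]; rewrite /= ?HP ?HQ. Qed.
Lemma labelF e : edge_label P (Fe e) = edge_label P' e.
Proof. by case: e => [[s r] [|]]; rewrite /= ?HP ?HQ. Qed.

Lemma edgesF c : cyc_edges (map Ft c) = map Fe (cyc_edges c).
Proof. by rewrite /cyc_edges -!map_comp. Qed.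
Lemma vertsF c : cyc_verts (map Ft c) = map Hv (cyc_verts c).
Proof. by rewrite /cyc_verts -!map_comp; apply: eq_map => t /=; rewrite -tailF. Qed.

Lemma is_cycleF c : is_cycle P Q (map Ft c) = is_cycle P' Q' c.
Proof.
rewrite /is_cycle size_map all_map (eq_all trav_okF) cycle_map.
have -> : map (@trav_tail _ _) (map Ft c) = map Hv (map (@trav_tail _ _) c) by exact: vertsF.
rewrite (map_inj_uniq Hv_inj).
have -> : map fst (map Ft c) = map Fe (map fst c) by exact: edgesF.
rewrite (map_inj_uniq Fe_inj).
congr [&& _, _, _, _ & _]; apply: eq_cycle => t u /=.
case: t => [[[s r] b] [|]]; case: u => [[[s1 r1] b1] [|]] /=. all: rewrite ?(inj_eq h_inj) //. by apply/eqP/eqP => [[/h_inj->]|[->]].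
Qed.

Lemma signcF c : cycle_sign P Q (map Ft c) = cycle_sign P' Q' c.
Proof. by rewrite /cycle_sign big_map; apply: eq_bigr => t _; exact: signF. Qed.

Lemma e_cycleF c : e_cycle P Q (map Ft c) = e_cycle P' Q' c.
Proof. by rewrite /e_cycle is_cycleF /cycle_parity signcF size_map. Qed.

Lemma s_cycleF c : s_cycle P Q (map Ft c) = s_cycle P' Q' c.
Proof.
rewrite /s_cycle is_cycleF all_map size_map zip_mapr !big_map.
have E1 : forall t, edge_label P (Ft t).1 != None = (edge_label P' t.1 != None).
  by move=> t; rewrite -labelF.
rewrite (eq_all E1).
have E2 : forall p : nat * dsr_trav Sv Rs,
  odflt 0 (edge_label P (p.1, Ft p.2).2.1) = odflt 0 (edge_label P' p.2.1).
  by move=> p; rewrite -labelF.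
by rewrite (eq_bigr _ (fun p _ => E2 p)) [X in _ == X](eq_bigr _ (fun p _ => E2 p)).
Qed.

Lemma common_edgeF c d e :
  common_edge (map Ft c) (map Ft d) (Fe e) = common_edge c d e.
Proof. by rewrite /common_edge !edgesF !(mem_map Fe_inj). Qed.

Lemma common_edge_img c d e :
  common_edge (map Ft c) (map Ft d) e -> exists e', e = Fe e'.
Proof. by rewrite /common_edge edgesF => /andP[/mapP[e' _ ->] _]; exists e'. Qed.

Lemma endsF e : edge_ends (Fe e) = (Hv (edge_ends e).1, Hv (edge_ends e).2).
Proof. by case: e => [[s r] b]. Qed.

Lemma adjH c d x y :
  inter_adj c d x y -> inter_adj (map Ft c) (map Ft d) (Hv x) (Hv y).
Proof.
case/existsP=> e /andP[ce he]; apply/existsP; exists (Fe e).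
rewrite common_edgeF ce /=.
by case/orP: he => /eqP he; rewrite endsF he /= eqxx ?orbT.
Qed.

Lemma adjG c d a b :
  inter_adj (map Ft c) (map Ft d) a b -> inter_adj c d (Gv a) (Gv b).
Proof.
case/existsP=> e /andP[ce he].
have [e' ee] := common_edge_img ce; subst e.
apply/existsP; exists e'; rewrite -common_edgeF ce /=.
by case/orP: he; rewrite endsF => /eqP [<- <-]; rewrite /= hK eqxx ?orbT.
Qed.

Lemma connectF c d x y :
  connect (inter_adj (map Ft c) (map Ft d)) (Hv x) (Hv y) =
  connect (inter_adj c d) x y.
Proof.
apply/idP/idP => H.
  by rewrite -(HvK x) -(HvK y); exact: (connect_homo (@adjG c d)) H.
exact: (connect_homo (@adjH c d)) H.
Qed.

Lemma comp_lengthF c d v :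
  comp_length (map Ft c) (map Ft d) (Hv v) = comp_length c d v.
Proof.
rewrite /comp_length -(card_imset _ Fe_inj); apply: eq_card => e.
rewrite [in LHS]inE; case E: (common_edge _ _ e) => /=.
  have [e' ee] := common_edge_img E; subst e.
  rewrite (mem_imset _ _ Fe_inj) inE -common_edgeF E /=.
  by rewrite -connectF.
apply/esym/imsetP => -[e']; rewrite inE => /andP[ce' _] ee.
by rewrite ee common_edgeF ce' in E.
Qed.

Lemma common_vertF c d v :
  common_vert (map Ft c) (map Ft d) (Hv v) = common_vert c d v.
Proof. by rewrite /common_vert !vertsF !(mem_map Hv_inj). Qed.

Lemma common_vert_img c d v :
  common_vert (map Ft c) (map Ft d) v -> exists v', v = Hv v'.
Proof. by rewrite /common_vert vertsF => /andP[/mapP[v' _ ->] _]; exists v'. Qed.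

Lemma same_cycleF c d : same_cycle (map Ft c) (map Ft d) <-> same_cycle c d.
Proof. rewrite /same_cycle !edgesF; exact: (@mem_map_eqi _ _ Fe Fe_inj). Qed.

Lemma dir_agreeF c d : dir_agree (map Ft c) (map Ft d) = dir_agree c d.
Proof.
rewrite /dir_agree all_map; apply: eq_all => t /=.
rewrite all_map; apply: eq_all => u /=.
by rewrite (inj_eq Fe_inj).
Qed.

Section WithHc.
Hypothesis Hc : forall c, is_cycle P Q c -> exists c', c = map Ft c'.

Lemma odd_interF c d :
  odd_intersection P Q (map Ft c) (map Ft d) <-> odd_intersection P' Q' c d.
Proof.
split.
- case=> c1 [d1 [cy1 dy1 s1 s2 /and3P[da ex fa]]].
  have [c2 E1] := Hc cy1; have [d2 E2] := Hc dy1; subst c1 d1.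
  exists c2, d2; rewrite -!is_cycleF; split => //; try exact/same_cycleF.
  apply/and3P; split; first by rewrite -dir_agreeF.
    case/existsP: ex => v cv; have [v' ev] := common_vert_img cv; subst v.
    by apply/existsP; exists v'; rewrite -common_vertF.
  apply/forallP => v; apply/implyP => cv.
  by move/forallP: fa => /(_ (Hv v)); rewrite common_vertF cv comp_lengthF.
- case=> c1 [d1 [cy1 dy1 s1 s2 /and3P[da ex fa]]].
  exists (map Ft c1), (map Ft d1); rewrite !is_cycleF; split => //; try exact/same_cycleF.
  apply/and3P; split; first by rewrite dir_agreeF.
    by case/existsP: ex => v cv; apply/existsP; exists (Hv v); rewrite common_vertF.
  apply/forallP => v; apply/implyP => cv.
  have [v' ev] := common_vert_img cv; subst v.
  by move/forallP: fa => /(_ v'); rewrite -common_vertF cv comp_lengthF.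
Qed.

Lemma oddF : dsr_odd P Q <-> dsr_odd P' Q'.
Proof.
split=> H c.
  by rewrite -e_cycleF.
case cy: (is_cycle P Q c); last by rewrite /e_cycle cy.
by have [c' ->] := Hc cy; rewrite e_cycleF.
Qed.

Lemma steadyF : dsr_steady P Q <-> dsr_steady P' Q'.
Proof.
split=> H c cy.
  by rewrite -s_cycleF; apply: H; rewrite is_cycleF.
by have [c' E] := Hc cy; subst c; rewrite s_cycleF; apply: H; rewrite -is_cycleF.
Qed.

Lemma odd_starF : dsr_odd_star P Q <-> dsr_odd_star P' Q'.
Proof.
split=> -[H1 H2]; split.
- by move=> c ec; rewrite -s_cycleF; apply: H1; rewrite e_cycleF.
- by move=> c d ec ed /odd_interF; apply: H2; rewrite ?e_cycleF.
- move=> c ec; have [c' E] := Hc (proj1 (andP ec)); subst c.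
  by rewrite s_cycleF; apply: H1; rewrite -e_cycleF.
- move=> c d ec ed.
  have [c' E] := Hc (proj1 (andP ec)); have [d' E'] := Hc (proj1 (andP ed)); subst c d.
  by move/odd_interF; apply: H2; rewrite -?e_cycleF.
Qed.
End WithHc.

Lemma HcG (Hgood : forall c, is_cycle P Q c -> forall t, t \in c -> h (g t.1.1.2) = t.1.1.2) :
  forall c, is_cycle P Q c -> exists c', c = map Ft c'.
Proof.
move=> c cy; exists (map Gt c); rewrite -map_comp map_id_in // => t tin /=.
rewrite /Ft /Gt /Fe /Ge /= (Hgood _ cy _ tin).
by case: t {tin} => [[[s r] b] d].
Qed.
End Transfer.

Lemma headE (Sv Rv : finType) (t : dsr_trav Sv Rv) :
  trav_head t = if t.2 then inr t.1.1.2 else inl t.1.1.1.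
Proof. by case: t => [[[s r] b] d]. Qed.
Lemma tailE (Sv Rv : finType) (t : dsr_trav Sv Rv) :
  trav_tail t = if t.2 then inl t.1.1.1 else inr t.1.1.2.
Proof. by case: t => [[[s r] b] d]. Qed.
Lemma ok_edge (R : realFieldType) (Sv Rv : finType) P Q (t : dsr_trav Sv Rv) :
  trav_ok (R:=R) P Q t -> dsr_edge P Q t.1.
Proof. by case: t => [[[s r] b] d] /andP[]. Qed.

Section Conc.
Variables (R : realFieldType) (n m : nat) (A : 'M[R]_(n, m)) (k : 'I_m) (i0 : 'I_n).
Hypothesis Hi0 : forall i, (A i k != 0) = (i == i0).

Lemma PQ r s : L2under A^T r s = L2bar A s r.
Proof. by case: r => c l; rewrite /L2under /L2bar !mxE. Qed.

Lemma L2bar_nz (s : pairs2 n) l : L2bar A s (k, l) != 0 ->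
  ((val s).1 == l) && ((val s).2 == i0) || ((val s).1 == i0) && ((val s).2 == l).
Proof.
rewrite /L2bar /=; have [<-|ne1] := eqVneq l (sval s).1.
  by rewrite Hi0 => ->.
have [<-|ne2] := eqVneq l (sval s).2; last by rewrite eqxx.
by rewrite oppr_eq0 Hi0 => ->.
Qed.

Lemma edge_unique (e e' : dsr_edgeT (pairs2 n) ('I_m * 'I_n)%type) :
  dsr_edge (L2bar A) (L2under A^T) e -> dsr_edge (L2bar A) (L2under A^T) e' ->
  e.1.2 = e'.1.2 -> e.1.2.1 = k -> e = e'.
Proof.
case: e => [[s [c l]] b]; case: e' => [[s' [c' l']] b'] /= E1 E2 [ec el] ck; subst c' l' c.
move: E1 E2; case: b; last by rewrite PQ eqxx andbF.
case: b'; last by rewrite PQ eqxx andbF.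
rewrite /= => E1 E2. have H := L2bar_nz E1. have H' := L2bar_nz E2.
suff -> : s = s' by [].
clear E1 E2; move: s s' H H' => [[x y] xy] [[x' y'] xy'] /= H H'; apply: val_inj => /=.
case/orP: H => /andP[/eqP ex /eqP ey]; case/orP: H' => /andP[/eqP ex' /eqP ey'];
  subst; rewrite //=.
- by have := ltn_trans xy xy'; rewrite ltnn.
- by have := ltn_trans xy xy'; rewrite ltnn.
Qed.

Lemma cycle_avoids c t :
  is_cycle (L2bar A) (L2under A^T) c -> t \in c -> t.1.1.2.1 != k.
Proof.
move=> cy tin; apply/negP => /eqP tk.
case/and5P: cy => _ okc cyc _ uq.
set r := t.1.1.2.
have [w win hw] : exists2 w, w \in c & trav_head w = inr r.
  case td: t.2.
    by exists t => //; rewrite headE td.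
  exists (prev c t); first by rewrite mem_prev.
  by rewrite (eqP (prev_cycle cyc tin)) tailE td.
have uin : next c w \in c by rewrite mem_next.
have hu : trav_tail (next c w) = inr r by rewrite -(eqP (next_cycle cyc win)).
move: hw hu; rewrite headE tailE.
case wd: w.2 => // -[wr]; case ud: (next c w).2 => // -[ur].
have ew := ok_edge (allP okc _ win); have eu := ok_edge (allP okc _ uin).
have := edge_unique ew eu; rewrite wr ur => /(_ erefl tk) E.
have := uniq_map_in uq win uin E => wu.
by move: ud; rewrite -wu wd.
Qed.
End Conc.


Unset Implicit Arguments.
Set Strict Implicit.
Theorem lemma5p1 (R : realFieldType) (n m : nat) (A : 'M[R]_(n, m)) (k : 'I_m) :
  (2 <= n)%N -> (2 <= m)%N -> #|[set i | A i k != 0]| = 1%N ->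
  [/\ dsr2_odd_star (col' k A) (col' k A)^T <-> dsr2_odd_star A A^T,
      dsr2_odd (col' k A) (col' k A)^T <-> dsr2_odd A A^T &
      dsr2_steady (col' k A) (col' k A)^T <-> dsr2_steady A A^T].
Proof.
move=> hn hm /eqP /cards1P [i0 Ei0].
have Hi0 : forall i, (A i k != 0) = (i == i0).
  by move=> i; move: Ei0 => /setP /(_ i); rewrite !inE.
have hm1 : (0 < m.-1)%N by case: m hm k A {Ei0 Hi0} => [|[|m']].
pose d0 : 'I_m.-1 := Ordinal hm1.
pose h := fun r : ('I_m.-1 * 'I_n)%type => (lift k r.1, r.2).
pose g := fun r : ('I_m * 'I_n)%type => (odflt d0 (unlift k r.1), r.2).
have hK : cancel h g by case=> c l; rewrite /g /h /= liftK.
have HP : forall s r, L2bar (col' k A) s r = L2bar A s (h r).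
  by move=> s [c l]; rewrite /L2bar /h /= !mxE.
have HQ : forall r s, L2under (col' k A)^T r s = L2under A^T (h r) s.
  by move=> [c l] s; rewrite /L2under /h /= !mxE.
have Hgood : forall c, is_cycle (L2bar A) (L2under A^T) c ->
    forall t, t \in c -> h (g t.1.1.2) = t.1.1.2.
  move=> c cy t tin; have := cycle_avoids Hi0 cy tin.
  case: t.1.1.2 => [c0 l] /= ne.
  rewrite eq_sym in ne.
  by have [j -> E] := unlift_some ne; rewrite /h /g /= E.
have Hc := HcG Hgood.
rewrite /dsr2_odd_star /dsr2_odd /dsr2_steady.
split; apply: iff_sym.
- exact: odd_starF hK HP HQ Hc.
- exact: oddF hK HP HQ Hc.
- exact: steadyF hK HP HQ Hc.
Qed.
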